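(* The Banach space $c$ of convergent real sequences (with the sup norm) can be U-embedded into $C[0,1]$.
   Context: $C[0,1]$ carries the sup norm. A linear isometry $T\colon X\to Y$ is a U-embedding if every $x^*\in X^*$ has a unique $y^*\in Y^*$ with $T^*(y^* )=x^*$ and $\|y^*\|=\|x^*\|$; ''$X$ can be U-embedded into $Y$'' means such a $T$ exists. *)

(* Defs.v *)
From HB Require Import structures.
From mathcomp Require Import all_boot all_order all_algebra.
From mathcomp Require Import all_classical all_reals all_analysis.
From mathcomp Require Import Rstruct Rstruct_topology.
Set Implicit Arguments. Unset Strict Implicit. Unset Printing Implicit Defensive.
Import Order.TTheory GRing.Theory Num.Theory.
Import numFieldNormedType.Exports.
Local Open Scope classical_set_scope.
Local Open Scope ring_scope.

Notation RR := Rdefinitions.R.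

Definition conv_seq (u : nat -> RR) : Prop := cvgn u.
Definition c_norm (u : nat -> RR) : RR := sup (range (fun n => `|u n|)).

(* The space C[0,1]: real functions continuous on [0,1], represented by
   functions RR -> RR (only their values on [0,1] matter), with the sup norm on [0,1]. *)
Definition I01 : set RR := [set x | 0 <= x <= 1].
Definition C01 (f : RR -> RR) : Prop := {within I01, continuous f}.
Definition C_norm (f : RR -> RR) : RR := sup [set `|f x| | x in I01].

Definition c_dual (phi : (nat -> RR) -> RR) : Prop :=
  (forall (a : RR) u v, conv_seq u -> conv_seq v ->
      phi (fun n => a * u n + v n) = a * phi u + phi v) /\
  exists M : RR, forall u, conv_seq u -> `|phi u| <= M * c_norm u.

(* Bounded (= continuous) linear functionals on C[0,1].  Boundedness forces
   phi f = phi g whenever f = g on [0,1], so these are exactly the elements of the dual of C[0,1]. *)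
Definition C_dual (psi : (RR -> RR) -> RR) : Prop :=
  (forall (a : RR) f g, C01 f -> C01 g ->
      psi (fun x => a * f x + g x) = a * psi f + psi g) /\
  exists M : RR, forall f, C01 f -> `|psi f| <= M * C_norm f.

Definition c_dual_norm (phi : (nat -> RR) -> RR) : RR :=
  sup [set `|phi u| | u in [set u | conv_seq u /\ c_norm u <= 1]].
Definition C_dual_norm (psi : (RR -> RR) -> RR) : RR :=
  sup [set `|psi f| | f in [set f | C01 f /\ C_norm f <= 1]].

Definition lin_isometry_c_C (T : (nat -> RR) -> (RR -> RR)) : Prop :=
  (forall u, conv_seq u -> C01 (T u)) /\
  (forall (a : RR) u v, conv_seq u -> conv_seq v -> forall x, I01 x ->
      T (fun n => a * u n + v n) x = a * T u x + T v x) /\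
  (forall u, conv_seq u -> C_norm (T u) = c_norm u).

Definition U_embedding_c_C (T : (nat -> RR) -> (RR -> RR)) : Prop :=
  lin_isometry_c_C T /\
  forall phi, c_dual phi ->
    exists psi,
      (C_dual psi /\ (forall u, conv_seq u -> psi (T u) = phi u) /\
       C_dual_norm psi = c_dual_norm phi) /\
      (forall psi', C_dual psi' -> (forall u, conv_seq u -> psi' (T u) = phi u) ->
         C_dual_norm psi' = c_dual_norm phi ->
         forall f, C01 f -> psi' f = psi f).

(* Main.v *)
Require Import Defs.
From HB Require Import structures.
From mathcomp Require Import all_boot all_order all_algebra.
From mathcomp Require Import all_classical all_reals all_analysis.
From mathcomp Require Import Rstruct Rstruct_topology.
Set Implicit Arguments. Unset Strict Implicit. Unset Printing Implicit Defensive.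
Import Order.TTheory GRing.Theory Num.Theory.
Import numFieldNormedType.Exports.
Local Open Scope classical_set_scope.
Local Open Scope ring_scope.

From mathcomp Require Import lra ring.

Lemma conv_bounded u : conv_seq u -> exists B : RR, forall n, `|u n| <= B.
Proof.
move=> Hu. have := @cvg_seq_bounded _ RR^o u Hu. rewrite /= => /ex_bound H. have [|M HM] := H. by apply: (@globally_properfilter _ _ 0%N). by exists M => n; apply: HM.
Qed.

Lemma cnorm_ge u n : conv_seq u -> `|u n| <= c_norm u.
Proof.
move=> /conv_bounded [B HB]. apply: ub_le_sup; last by exists n.
by exists B => _ [m _ <-].
Qed.

Lemma cnorm_le u B : (forall n, `|u n| <= B) -> c_norm u <= B.
Proof.
move=> HB. apply: ge_sup; first by exists `|u 0%N|, 0%N.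
by move=> _ [m _ <-].
Qed.

Lemma cnorm_ge0 u : conv_seq u -> 0 <= c_norm u.
Proof. move=> Hu. exact: le_trans (normr_ge0 _) (cnorm_ge 0 Hu). Qed.

Lemma cnorm_lim u : conv_seq u -> `|limn u| <= c_norm u.
Proof.
move=> Hu.
have Hn : (fun n => `|u n|) @ \oo --> `|limn u|.
  exact: (@cvg_norm _ RR^o _ \oo _ u (limn u) Hu).
rewrite -(cvg_lim (@Rhausdorff RR) Hn). apply: limr_le.
  by apply/cvg_ex; exists `|limn u|.
by apply: nearW => n; exact: cnorm_ge.
Qed.

Lemma conv_lin (a : RR) u v : conv_seq u -> conv_seq v ->
  conv_seq (fun n => a * u n + v n) /\ limn (fun n => a * u n + v n) = a * limn u + limn v.
Proof.
move=> Hu Hv.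
have H : (fun n => a * u n + v n) @ \oo --> a * limn u + limn v.
  have H1 : (fun n => a * u n) @ \oo --> a * limn u.
    by apply: cvgMl_tmp.
  exact: (@cvgD _ RR^o nat \oo _ (fun n => a * u n) v (a * limn u) (limn v) H1 Hv).
split; first by apply/cvg_ex; exists (a * limn u + limn v).
exact: (cvg_lim (@Rhausdorff RR) H).
Qed.

Lemma sin_natpi (x : RR) n : `|sin (x + pi * n%:R)| = `|sin x|.
Proof.
elim: n => [|n IH]; first by rewrite mulr0 addr0.
by rewrite mulrSr mulrDr mulr1 addrA sinDpi normrN.
Qed.

Lemma cos_natpi (x : RR) n : `|cos (x + pi * n%:R)| = `|cos x|.
Proof.
elim: n => [|n IH]; first by rewrite mulr0 addr0.
by rewrite mulrSr mulrDr mulr1 addrA cosDpi normrN.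
Qed.

Lemma sin_natpi0 n : sin (pi * n%:R : RR) = 0.
Proof. by apply/normr0_eq0; rewrite -(add0r (pi * _)) sin_natpi sin0 normr0. Qed.

Lemma cos_natpi2 n : cos (pi * n%:R : RR) ^+ 2 = 1.
Proof.
rewrite -real_normK ?num_real //.
by rewrite -(add0r (pi * _)) cos_natpi cos0 normr1 expr1n.
Qed.

Lemma sin_zero (y : RR) : 0 < y -> sin (pi * y) = 0 -> exists n : nat, y = n.+1%:R.
Proof.
move=> y0 Hs.
have /andP [H1 H2] := truncn_itv (ltW y0).
set m := Num.truncn y in H1 H2.
have E : pi * y = pi * (y - m%:R) + pi * m%:R by rewrite -mulrDr subrK.
have Hd : `|sin (pi * (y - m%:R))| = 0 by rewrite -(sin_natpi _ m) -E Hs normr0.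
have d0 : y - m%:R = 0.
  apply/eqP; apply: contraT => dn0.
  have dpos : 0 < y - m%:R by rewrite lt_neqAle eq_sym dn0 subr_ge0.
  have : 0 < sin (pi * (y - m%:R)).
    apply: sin_gt0_pi; apply/andP; split; first by rewrite mulr_gt0 // pi_gt0.
    rewrite -[ltRHS]mulr1 ltr_pM2l ?pi_gt0 //. by rewrite ltrBlDl -mulrSr.
  move=> Hp; move: (gtr0_norm Hp); rewrite Hd; lra.
clear E Hd; case: m d0 H1 H2 => [|n] d0 _ _.
  by move: d0; rewrite subr0 => d0; move: y0; rewrite d0 ltxx.
by exists n; apply/eqP; rewrite -subr_eq0 d0.
Qed.

Definition idx (x : RR) : nat := (Num.truncn (x^-1 + 2^-1)).-1.
Definition tn (n : nat) : RR := (n.+1%:R)^-1.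

Lemma idx_tn n : idx (tn n) = n.
Proof.
rewrite /idx /tn invrK.
have -> : Num.truncn ((n.+1)%:R + 2^-1 : RR) = n.+1.
  apply: truncn_def; apply/andP; split.
  - rewrite lerDl; lra.
  - rewrite [X in _ < X]mulrSr ltrD2l; lra.
by [].
Qed.

Lemma idx_ge (N : nat) (y : RR) : 0 < y -> y <= tn N -> (N <= idx y)%N.
Proof.
move=> y0 yN. rewrite /idx.
have : (N.+1 <= Num.truncn (y^-1 + 2^-1))%N.
  rewrite truncn_ge_nat; last by rewrite addr_ge0 // invr_ge0 ltW.
  have : N.+1%:R <= y^-1.
    rewrite -(invrK (N.+1%:R : RR)) lef_pV2 ?posrE // invr_gt0 ltr0n.
  lra.
by case: (Num.truncn _).
Qed.

Definition cw (x : RR) : RR := cos (pi / x) ^+ 2.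
Definition sw (x : RR) : RR := sin (pi / x) ^+ 2.
Definition Tm (u : nat -> RR) (x : RR) : RR :=
  if x == 0 then limn u else u (idx x) * cw x + limn u * (1 - x) * sw x.
Definition rho (x : RR) : RR := 1 - x * sw x.

Lemma cw_sw x : cw x + sw x = 1. Proof. exact: cos2Dsin2. Qed.
Lemma cw_ge0 x : 0 <= cw x. Proof. exact: sqr_ge0. Qed.
Lemma sw_ge0 x : 0 <= sw x. Proof. exact: sqr_ge0. Qed.
Lemma sw_le1 x : sw x <= 1. Proof. have := cw_sw x; have := cw_ge0 x; lra. Qed.

Lemma tn_neq0 n : tn n != 0. Proof. by rewrite /tn invr_eq0 pnatr_eq0. Qed.
Lemma tn_gt0 n : 0 < tn n. Proof. by rewrite /tn invr_gt0 ltr0n. Qed.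

Lemma T_node u n : Tm u (tn n) = u n.
Proof.
rewrite /Tm (negbTE (tn_neq0 n)) idx_tn /cw /sw.
have -> : pi / tn n = pi * n.+1%:R by rewrite /tn invrK.
by rewrite cos_natpi2 sin_natpi0 expr0n /= !mulr0 addr0 mulr1.
Qed.

Lemma T_lin (a : RR) u v x : conv_seq u -> conv_seq v ->
  Tm (fun n => a * u n + v n) x = a * Tm u x + Tm v x.
Proof.
move=> Hu Hv; have [_ E] := conv_lin a Hu Hv.
rewrite /Tm E; case: (x == 0) => //. ring.
Qed.

Lemma rho_bounds x : I01 x -> 0 <= rho x <= 1.
Proof.
move=> /andP [x0 x1]; have := sw_ge0 x; have := sw_le1 x => h1 h2.
rewrite /rho; apply/andP; split; last by rewrite lerBlDr lerDl mulr_ge0.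
rewrite subr_ge0; nra.
Qed.

Lemma T_bound u x : conv_seq u -> I01 x -> `|Tm u x| <= rho x * c_norm u.
Proof.
move=> Hu Ix; have /andP [x0 x1] := Ix.
have HL := cnorm_lim Hu; have Hk := cnorm_ge (idx x) Hu.
rewrite /Tm /rho; case: eqP => [->|_]; first by rewrite mul0r subr0 mul1r.
have h1 := cw_ge0 x; have h2 := sw_ge0 x; have h3 := cw_sw x.
apply: le_trans (ler_normD _ _) _.
have h4 : 0 <= (1 - x) * sw x by rewrite mulr_ge0 ?subr_ge0.
rewrite normrM (ger0_norm h1) -mulrA normrM (ger0_norm h4).
have : `|u (idx x)| * cw x <= c_norm u * cw x by rewrite ler_wpM2r.
have : `|limn u| * ((1 - x) * sw x) <= c_norm u * ((1 - x) * sw x).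
  by rewrite ler_wpM2r.
have -> : (1 - x * sw x) * c_norm u = c_norm u * cw x + c_norm u * ((1 - x) * sw x).
  have -> : cw x = 1 - sw x by rewrite -h3 addrK.
  ring.
lra.
Qed.

Lemma T_bound1 u x : conv_seq u -> I01 x -> `|Tm u x| <= c_norm u.
Proof.
move=> Hu Ix; apply: le_trans (T_bound Hu Ix) _.
have /andP [r0 r1] := rho_bounds Ix; have := cnorm_ge0 Hu.
nra.
Qed.
Lemma cont_piV (x0 : RR) : x0 != 0 -> {for x0, continuous (fun y : RR => pi / y)}.
Proof.
move=> h.
rewrite /continuous_at.
apply: (@cvgMl_tmp RR _ (nbhs x0) _ (fun y : RR => y^-1) pi x0^-1).
by apply: cvgV.
Qed.

Lemma cont_cw (x0 : RR) : x0 != 0 -> {for x0, continuous cw}.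
Proof.
move=> h.
have h1 : {for x0, continuous (fun y : RR => cos (pi / y))}.
  exact: (continuous_comp (cont_piV h) (@continuous_cos _ _)).
have -> : cw = (fun y => cos (pi / y) * cos (pi / y)) by apply: funext => y; rewrite /cw expr2.
rewrite /continuous_at. exact: cvgM.
Qed.

Lemma cont_sw (x0 : RR) : x0 != 0 -> {for x0, continuous sw}.
Proof.
move=> h.
have h1 : {for x0, continuous (fun y : RR => sin (pi / y))}.
  exact: (continuous_comp (cont_piV h) (@continuous_sin _ _)).
have -> : sw = (fun y => sin (pi / y) * sin (pi / y)) by apply: funext => y; rewrite /sw expr2.
rewrite /continuous_at. exact: cvgM.
Qed.

Lemma forP (h : RR -> RR) x0 : {for x0, continuous h} ->
  forall e : RR, 0 < e -> exists2 d : RR, 0 < d & forall y, `|x0 - y| < d -> `|h x0 - h y| < e.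
Proof.
move=> Hc e e0.
have := (@cvgrPdist_lt _ RR^o _ (nbhs x0) _ h (h x0)).1 Hc e e0.
move=> H1; have {H1} := H1 ltac:(typeclasses eauto). move=> /nbhs_ballP [d d0 Hd]. exists d => // y xy; exact: Hd.
Qed.

Lemma seq_eps u : conv_seq u -> forall e : RR, 0 < e ->
  exists N : nat, forall n, (N <= n)%N -> `|limn u - u n| < e.
Proof.
move=> Hu e e0.
have := (@cvgrPdist_lt _ RR^o _ \oo _ u (limn u)).1 Hu e e0.
move=> H1; have {H1} := H1 ltac:(typeclasses eauto).
move=> [N _ HN]. exists N => n Nn. exact: HN.
Qed.

Lemma idx_loc (x0 : RR) : 0 < x0 -> cos (pi / x0) != 0 ->
  exists2 d : RR, 0 < d & forall y, `|x0 - y| < d -> idx y = idx x0.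
Proof.
move=> x0p c0.
set z := fun y : RR => y^-1 + 2^-1.
have zc : {for x0, continuous z}.
  rewrite /continuous_at /z.
  apply: (@cvgD _ RR^o _ (nbhs x0) _ (fun y : RR => y^-1) (fun=> 2^-1)).
    by apply: cvgV => //; rewrite gt_eqF.
  exact: cvg_cst.
have z0 : 0 <= z x0 by rewrite /z addr_ge0 // invr_ge0 ltW.
have /andP [m1 m2] := truncn_itv z0.
set m := Num.truncn (z x0) in m1 m2.
have m3 : m%:R < z x0.
  rewrite lt_neqAle m1 andbT; apply/eqP => E.
  move: c0; rewrite /z in E.
  have -> : pi / x0 = pi * m%:R - pi / 2.
    have -> : x0^-1 = m%:R - 2^-1 by rewrite E addrK.
    by rewrite mulrBr.
  by rewrite cosBpihalf sin_natpi0 eqxx.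
have ep : 0 < Num.min (z x0 - m%:R) (m.+1%:R - z x0).
  by rewrite lt_min !subr_gt0 m3 m2.
have [d d0 Hd] := forP zc ep.
exists d => // y xy.
have := Hd y xy; rewrite lt_min => /andP [h1 h2].
rewrite /idx -/(z y) -/(z x0) -/m.
have -> : Num.truncn (z y) = m => //.
apply: truncn_def; apply/andP; split.
- have := ler_norm (z x0 - z y). lra.
- have := ler_norm (-(z x0 - z y)); rewrite normrN. lra.
Qed.
Lemma withinP (A : set RR) (f : RR -> RR) :
  {within A, continuous f} <-> forall x, A x -> forall e : RR, 0 < e ->
    exists2 d : RR, 0 < d & forall y, A y -> `|x - y| < d -> `|f x - f y| < e.
Proof.
rewrite continuous_subspace_in; split.
- move=> H x Ax e e0.
  have := H x; rewrite inE => /(_ Ax).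
  rewrite /continuous_at. change (nbhs (x : subspace A)) with (nbhs_subspace (x : subspace A)).
  rewrite -nbhs_subspace_in //.
  move=> Hc. have := (@cvgrPdist_lt _ RR^o _ (within A (nbhs x)) _ (from_subspace A f) (f x)).1 Hc e e0.
  move=> H1; have {H1} := H1 ltac:(typeclasses eauto). rewrite near_withinE => /nbhs_ballP [d d0 Hd].
  exists d => // y Ay xy. apply: Hd => //.
- move=> H x; rewrite inE => Ax.
  rewrite /continuous_at. change (nbhs (x : subspace A)) with (nbhs_subspace (x : subspace A)).
  rewrite -nbhs_subspace_in //.
  apply/(@cvgrPdist_lt _ RR^o _ (within A (nbhs x)) _ (from_subspace A f) (f x)) => e e0.
  have [d d0 Hd] := H x Ax e e0.
  rewrite near_withinE; apply/nbhs_ballP; exists d => // y.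
  move=> /= xy Ay. exact: Hd.
Qed.

Lemma cont_k (x0 : RR) : x0 != 0 -> {for x0, continuous (fun y : RR => (1 - y) * sw y)}.
Proof.
move=> h; rewrite /continuous_at.
apply: (@cvgM RR _ (nbhs x0) _ (fun y : RR => 1 - y) sw).
  apply: (@cvgB _ RR^o _ (nbhs x0) _ (fun=> 1) (fun y : RR => y)); [exact: cvg_cst | exact: cvg_id].
exact: cont_sw.
Qed.

Lemma T_cont u : conv_seq u -> C01 (Tm u).
Proof.
move=> Hu; apply/withinP => x0 Ix0 e e0.
set B := c_norm u.
have B0 : 0 <= B by apply: cnorm_ge0.
have HL : `|limn u| <= B by apply: cnorm_lim.
have Hk : forall n, `|u n| <= B by move=> n; apply: cnorm_ge.
have e2 : 0 < e / (2 * (B + 1)) by rewrite divr_gt0 // mulr_gt0 // ltr_pwDr.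
have eB : B * (e / (2 * (B + 1))) < e / 2.
  have Bn : B + 1 != 0 by rewrite gt_eqF // ltr_pwDr.
  have Bl : B / (B + 1) < 1 by rewrite ltr_pdivrMr ?ltr_pwDr // mul1r ltrDl.
  have -> : B * (e / (2 * (B + 1))) = (e / 2) * (B / (B + 1)) by field.
  rewrite -[X in _ < X]mulr1 ltr_pM2l //; lra.
have /andP [x00 x01] := Ix0.
have [x0z|x0n] := eqVneq x0 0.
-
  rewrite x0z.
  have [N HN] := seq_eps Hu (e:=e / 2) ltac:(lra).
  have tp := tn_gt0 N.
  exists (Num.min (tn N) (e / (2 * (B + 1)))); first by rewrite lt_min tp e2.
  move=> y Iy; rewrite sub0r normrN lt_min => /andP [y1 y2].
  rewrite /Tm eqxx; case: (eqVneq y 0) => [y0|yn]; first by rewrite subrr normr0.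
  have /andP [y0 _] := Iy.
  have yp : 0 < y by rewrite lt_neqAle eq_sym yn y0.
  rewrite (ger0_norm y0) in y1 y2.
  have kN : (N <= idx y)%N by apply: idx_ge => //; apply: ltW.
  have H1 := HN _ kN.
  have E : limn u - (u (idx y) * cw y + limn u * (1 - y) * sw y)
         = (limn u - u (idx y)) * cw y + limn u * (y * sw y).
    have -> : cw y = 1 - sw y by rewrite -(cw_sw y) addrK.
    ring.
  rewrite E; apply: le_lt_trans (ler_normD _ _) _.
  rewrite (normrM (limn u - u (idx y)) (cw y)) (normrM (limn u) (y * sw y)).
  rewrite (ger0_norm (cw_ge0 y)) (ger0_norm (mulr_ge0 y0 (sw_ge0 y))).
  have h1 : `|limn u - u (idx y)| * cw y <= `|limn u - u (idx y)|.
    by rewrite ler_piMr ?normr_ge0 // -(cw_sw y) lerDl sw_ge0.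
  have h2 : `|limn u| * (y * sw y) <= B * (e / (2 * (B + 1))).
    apply: ler_pM => //; first exact: mulr_ge0 y0 (sw_ge0 y).
    have := sw_le1 y; have := sw_ge0 y; nra.
  lra.
-
  have x0p : 0 < x0 by rewrite lt_neqAle eq_sym x0n x00.
  have [d1 d10 Hd1] := forP (cont_cw x0n) e2.
  have [d2 d20 Hd2] := forP (cont_k x0n) e2.
  have key : exists2 d3 : RR, 0 < d3 & forall y, `|x0 - y| < d3 ->
      `|u (idx x0) * cw x0 - u (idx y) * cw y| <= B * `|cw x0 - cw y|.
    case: (eqVneq (cos (pi / x0)) 0) => [c0|c0].
    + exists 1 => // y _.
      have -> : cw x0 = 0 by rewrite /cw c0 expr0n.
      rewrite mulr0 !sub0r !normrN normrM (ger0_norm (cw_ge0 y)).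
      by rewrite ler_wpM2r ?cw_ge0.
    + have [d3 d30 Hd3] := idx_loc x0p c0.
      exists d3 => // y xy; rewrite (Hd3 y xy) -mulrBr normrM.
      by rewrite ler_wpM2r.
  have [d3 d30 Hd3] := key.
  exists (Num.min x0 (Num.min d1 (Num.min d2 d3))).
    by rewrite !lt_min x0p d10 d20 d30.
  move=> y Iy; rewrite !lt_min => /and4P [y1 y2 y3 y4].
  have yn : y != 0.
    apply/eqP => y0; move: y1; rewrite y0 subr0 ger0_norm //; by rewrite ltxx.
  rewrite /Tm (negbTE x0n) (negbTE yn).
  have E : u (idx x0) * cw x0 + limn u * (1 - x0) * sw x0 - (u (idx y) * cw y + limn u * (1 - y) * sw y)
     = (u (idx x0) * cw x0 - u (idx y) * cw y) + limn u * ((1 - x0) * sw x0 - (1 - y) * sw y).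
    ring.
  rewrite E; apply: le_lt_trans (ler_normD _ _) _.
  have h1 := Hd3 y y4.
  have h2 : B * `|cw x0 - cw y| <= B * (e / (2 * (B + 1))).
    by rewrite ler_wpM2l // ltW // Hd1.
  have h3 : `|limn u * ((1 - x0) * sw x0 - (1 - y) * sw y)| <= B * (e / (2 * (B + 1))).
    rewrite normrM; apply: ler_pM => //; exact: ltW (Hd2 y y3).
  lra.
Qed.

Lemma I01E : I01 = `[0, 1]%classic.
Proof. by apply/seteqP; split => x /=; rewrite in_itv /=. Qed.

Lemma I01_compact : compact I01.
Proof. rewrite I01E; exact: segment_compact. Qed.

Lemma I01_0 : I01 0. Proof. by rewrite /I01 /= lexx ler01. Qed.

Lemma C01_lip f (h : RR -> RR) : C01 f -> (forall a b, `|h a - h b| <= `|a - b|) ->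
  C01 (fun x => h (f x)).
Proof.
move=> /withinP Hf Hh; apply/withinP => x Ix e e0.
have [d d0 Hd] := Hf x Ix e e0.
exists d => // y Iy xy. exact: le_lt_trans (Hh _ _) (Hd y Iy xy).
Qed.

Lemma C01_lin (a : RR) f g : C01 f -> C01 g -> C01 (fun x => a * f x + g x).
Proof.
move=> /withinP Hf /withinP Hg; apply/withinP => x Ix e e0.
have e1 : 0 < e / (2 * (`|a| + 1)) by rewrite divr_gt0 // mulr_gt0 // ltr_pwDr.
have [d1 d10 Hd1] := Hf x Ix _ e1.
have [d2 d20 Hd2] := Hg x Ix (e / 2) ltac:(lra).
exists (Num.min d1 d2); first by rewrite lt_min d10 d20.
move=> y Iy; rewrite lt_min => /andP [y1 y2].
have -> : a * f x + g x - (a * f y + g y) = a * (f x - f y) + (g x - g y) by ring.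
apply: le_lt_trans (ler_normD _ _) _.
have h2 := Hd2 y Iy y2.
have h1 : `|a * (f x - f y)| <= `|a| * (e / (2 * (`|a| + 1))).
  by rewrite normrM ler_wpM2l // ltW // Hd1.
have h3 : `|a| * (e / (2 * (`|a| + 1))) <= e / 2.
  have an : `|a| + 1 != 0 by rewrite gt_eqF // ltr_pwDr.
  have -> : `|a| * (e / (2 * (`|a| + 1))) = (e / 2) * (`|a| / (`|a| + 1)) by field.
  rewrite -[X in _ <= X]mulr1 ler_pM2l; last lra.
  by rewrite ler_pdivrMr ?ltr_pwDr // mul1r lerDl.
lra.
Qed.

Lemma C01_bounded f : C01 f -> exists B : RR, forall x, I01 x -> `|f x| <= B.
Proof.
move=> Hf.
have Hn : {within I01, continuous (fun x => `|f x|)}.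
  apply: (@C01_lip f (fun r : RR => `|r|) Hf) => a b. exact: ler_dist_dist.
have [c _ Hc] := compact_EVT_max (ex_intro _ 0 I01_0) I01_compact Hn.
exists `|f c| => x Ix. apply: Hc. by rewrite inE.
Qed.

Lemma Cnorm_ge f x : C01 f -> I01 x -> `|f x| <= C_norm f.
Proof.
move=> /C01_bounded [B HB] Ix. apply: ub_le_sup; last by exists x.
by exists B => _ [y Iy <-]; apply: HB.
Qed.

Lemma Cnorm_le f B : (forall x, I01 x -> `|f x| <= B) -> C_norm f <= B.
Proof.
move=> HB. apply: ge_sup; first by exists `|f 0|, 0 => //; exact: I01_0.
by move=> _ [y Iy <-]; apply: HB.
Qed.

Lemma Cnorm_ge0 f : C01 f -> 0 <= C_norm f.
Proof. move=> Hf. exact: le_trans (normr_ge0 _) (Cnorm_ge Hf I01_0). Qed.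

Lemma T_iso u : conv_seq u -> C_norm (Tm u) = c_norm u.
Proof.
move=> Hu; apply/eqP; rewrite eq_le; apply/andP; split.
  by apply: Cnorm_le => x Ix; apply: T_bound1.
apply: cnorm_le => n. rewrite -(T_node u n).
apply: Cnorm_ge; first exact: T_cont.
have := tn_gt0 n; rewrite /I01 /= => h; rewrite ltW //=.
by rewrite /tn invr_le1 ?ler1n // unitfE pnatr_eq0.
Qed.

Lemma I01_tn n : I01 (tn n).
Proof.
have := tn_gt0 n; rewrite /I01 /= => h; rewrite ltW //=.
by rewrite /tn invr_le1 ?ler1n // unitfE pnatr_eq0.
Qed.

Definition Sm (f : RR -> RR) : nat -> RR := fun n => f (tn n).

Lemma tn_le m n : (m <= n)%N -> tn n <= tn m.
Proof.
move=> mn; rewrite /tn lef_pV2 ?posrE ?ltr0n // ler_nat. by [].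
Qed.

Lemma S_cvg f : C01 f -> Sm f @ \oo --> f 0.
Proof.
move=> /withinP Hf; apply/(@cvgrPdist_lt _ RR^o _ \oo _ (Sm f) (f 0)) => e e0.
have [d d0 Hd] := Hf 0 I01_0 e e0.
set N := Num.truncn (d^-1).
have HN : tn N < d.
  rewrite /tn -[X in _ < X]invrK ltf_pV2 ?posrE ?ltr0n ?invr_gt0 //.
  exact: truncnS_gt.
exists N => // n Nn. rewrite /Sm. apply: Hd; first exact: I01_tn.
rewrite sub0r normrN ger0_norm; last exact: ltW (tn_gt0 n).
exact: le_lt_trans (tn_le Nn) HN.
Qed.

Lemma S_conv f : C01 f -> conv_seq (Sm f) /\ limn (Sm f) = f 0.
Proof.
move=> Hf; have H := S_cvg Hf; split.
  by apply/cvg_ex; exists (f 0).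
exact: (cvg_lim (@Rhausdorff RR) H).
Qed.

Lemma S_norm f : C01 f -> c_norm (Sm f) <= C_norm f.
Proof. move=> Hf; apply: cnorm_le => n; apply: Cnorm_ge => //; exact: I01_tn. Qed.

Lemma S_T u : Sm (Tm u) = u.
Proof. by apply: funext => n; rewrite /Sm T_node. Qed.

Lemma phi0 phi : c_dual phi -> phi (fun _ => 0) = 0.
Proof.
move=> [Hl _].
have h0 : conv_seq (fun _ : nat => (0 : RR)) by apply/cvg_ex; exists 0; exact: (@cvg_cst RR (0 : RR) nat \oo _).
have := Hl 1 _ _ h0 h0.
have -> : (fun n : nat => 1 * (0 : RR) + 0) = (fun _ => 0) by apply: funext => n; ring.
move=> h; have : phi (fun _ => 0) + phi (fun _ => 0) = phi (fun _ => 0) + 0.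
  by rewrite addr0 {3}h mul1r.
by move/addrI.
Qed.

Lemma psi0 psi : C_dual psi -> psi (fun _ => 0) = 0.
Proof.
move=> [Hl _].
have h0 : C01 (fun _ : RR => (0 : RR)) by apply: continuous_subspaceT => x; exact: cvg_cst.
have := Hl 1 _ _ h0 h0.
have -> : (fun x : RR => 1 * (0 : RR) + 0) = (fun _ => 0) by apply: funext => n; ring.
move=> h; have : psi (fun _ => 0) + psi (fun _ => 0) = psi (fun _ => 0) + 0.
  by rewrite addr0 {3}h mul1r.
by move/addrI.
Qed.

Lemma exist_part phi : c_dual phi ->
  C_dual (fun f => phi (Sm f)) /\ (forall u, conv_seq u -> phi (Sm (Tm u)) = phi u) /\
  C_dual_norm (fun f => phi (Sm f)) = c_dual_norm phi.
Proof.
move=> Hphi; have [Hl [M HM]] := Hphi.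
split; [split|split].
- move=> a f g Hf Hg.
  have [Hf1 _] := S_conv Hf; have [Hg1 _] := S_conv Hg.
  exact: Hl a (Sm f) (Sm g) Hf1 Hg1.
- exists `|M| => f Hf.
  have [Hf1 _] := S_conv Hf.
  apply: le_trans (HM _ Hf1) _.
  apply: le_trans (ler_wpM2r (cnorm_ge0 Hf1) (ler_norm M)) _.
  by rewrite ler_wpM2l // S_norm.
- by move=> u Hu; rewrite S_T.
- rewrite /C_dual_norm /c_dual_norm; congr sup.
  apply/seteqP; split => _ [x Hx <-].
  + have [Hf Hn] := Hx.
    have [Hf1 _] := S_conv Hf.
    exists (Sm x) => //; split => //; exact: le_trans (S_norm Hf) Hn.
  + have [Hu Hn] := Hx.
    exists (Tm x); last by rewrite S_T.
    by split; [exact: T_cont | rewrite T_iso].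
Qed.

Lemma rho_cont : C01 rho.
Proof.
apply/withinP => x0 Ix0 e e0.
have [x0z|x0n] := eqVneq x0 0.
- exists e => // y Iy; rewrite x0z sub0r normrN => ye.
  have /andP [y0 y1] := Iy.
  rewrite /rho mul0r subr0 opprB addrC subrK normrM (ger0_norm y0).
  rewrite (ger0_norm (sw_ge0 y)).
  apply: le_lt_trans ye; rewrite ger0_norm // ler_piMr // ?sw_le1 //.
- have Hc : {for x0, continuous rho}.
    rewrite /continuous_at /rho.
    apply: (@cvgB _ RR^o _ (nbhs x0) _ (fun=> 1) (fun y : RR => y * sw y)).
      exact: cvg_cst.
    apply: (@cvgM RR _ (nbhs x0) _ (fun y : RR => y) sw).
    all: try exact: cvg_id. all: try exact: (cont_sw x0n).
  have [d d0 Hd] := forP Hc e0.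
  by exists d => // y _; apply: Hd.
Qed.

Definition clamp (e t : RR) : RR := Num.max (- e) (Num.min e t).

Ltac mm := repeat match goal with
 | |- context [Num.min ?a ?b] => case: (leP a b) => ?
 | |- context [Num.max ?a ?b] => case: (leP a b) => ?
 end.

Lemma clamp_facts (e t : RR) : 0 < e ->
  [/\ `|clamp e t| <= e, (`|t| <= e -> clamp e t = t) & `|t - clamp e t| <= `|t| ].
Proof.
move=> e0; rewrite /clamp.
have h1 := ler_norm t; have h2 := ler_norm (- t); rewrite normrN in h2.
split.
- rewrite ler_norml; mm; apply/andP; split; lra.
- rewrite ler_norml => /andP [a b]; mm; apply/eqP; rewrite eq_le; apply/andP; split; lra.
- mm; rewrite ler_norml; apply/andP; split; lra.
Qed.

Lemma clamp_lip (e a b : RR) : 0 < e -> `|clamp e a - clamp e b| <= `|a - b|.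
Proof.
move=> e0; rewrite /clamp.
have h1 := ler_norm (a - b); have h2 := ler_norm (- (a - b)); rewrite normrN in h2.
mm; rewrite ler_norml; apply/andP; split; lra.
Qed.

Lemma maxlip (e a b : RR) : `|Num.max (e - `|a|) 0 - Num.max (e - `|b|) 0| <= `|a - b|.
Proof.
have h0 := ler_dist_dist a b.
have h1 := ler_norm (`|a| - `|b|); have h2 := ler_norm (- (`|a| - `|b|)); rewrite normrN in h2.
mm; rewrite ler_norml; apply/andP; split; lra.
Qed.

Lemma small_zero (y K : RR) : 0 <= K -> (forall e : RR, 0 < e -> `|y| <= K * e) -> y = 0.
Proof.
move=> K0 H; apply/eqP; apply: contraT => yn.
have yp : 0 < `|y| by rewrite normr_gt0.
have Kn : K + 1 != 0 by rewrite gt_eqF // ltr_pwDr.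
have := H (`|y| / (K + 1)) ltac:(by rewrite divr_gt0 // ltr_pwDr).
have -> : K * (`|y| / (K + 1)) = `|y| * (K / (K + 1)) by field.
have : K / (K + 1) < 1 by rewrite ltr_pdivrMr ?ltr_pwDr // mul1r ltrDl.
nra.
Qed.

Lemma psi_bound psi : C_dual psi -> exists2 K : RR, 0 <= K & forall f, C01 f -> `|psi f| <= K * C_norm f.
Proof.
move=> [_ [M HM]]; exists `|M| => // f Hf.
apply: le_trans (HM f Hf) _; by rewrite ler_wpM2r ?Cnorm_ge0 // ler_norm.
Qed.

Lemma psi_le_norm psi f : C_dual psi -> C01 f -> C_norm f <= 1 -> `|psi f| <= C_dual_norm psi.
Proof.
move=> Hpsi Hf Hn; have [K K0 HK] := psi_bound Hpsi.
apply: ub_le_sup; last by exists f.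
exists K => _ [g [Hg Hgn] <-].
apply: le_trans (HK g Hg) _; rewrite -[X in _ <= X]mulr1; exact: ler_wpM2l.
Qed.

Lemma phi_lin1 phi (k : RR) u : c_dual phi -> conv_seq u ->
  phi (fun n => k * u n + 0) = k * phi u.
Proof.
move=> Hphi Hu; have [Hl _] := Hphi.
have h0 : conv_seq (fun _ : nat => (0 : RR)).
  by apply/cvg_ex; exists 0; exact: (@cvg_cst RR (0 : RR) nat \oo _).
by rewrite (Hl k u (fun _ => 0) Hu h0) (phi0 Hphi) addr0.
Qed.

Lemma unique_zero phi psi g :
  c_dual phi -> C_dual psi -> (forall u, conv_seq u -> psi (Tm u) = phi u) ->
  C_dual_norm psi = c_dual_norm phi ->
  C01 g -> g 0 = 0 -> (forall n, g (tn n) = 0) -> psi g = 0.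
Proof.
move=> Hphi Hpsi HT Hnorm Hg g0 gt.
have [Hl _] := Hpsi.
have [K K0 HK] := psi_bound Hpsi.
apply: (small_zero K0) => e e0.
set g2 := fun x => clamp e (g x).
set g1 := fun x => g x - g2 x.
have Cg2 : C01 g2 by apply: (@C01_lip g (clamp e) Hg) => a b; exact: clamp_lip.
have Cg1 : C01 g1.
  have -> : g1 = (fun x => -1 * g2 x + g x) by apply: funext => x; rewrite /g1; ring.
  exact: C01_lin.
have Eg : g = (fun x => 1 * g1 x + g2 x) by apply: funext => x; rewrite /g1; ring.
have Hsplit : psi g = psi g1 + psi g2 by rewrite {1}Eg (Hl 1 g1 g2 Cg1 Cg2) mul1r.
have Hg2 : `|psi g2| <= K * e.
  apply: le_trans (HK g2 Cg2) _; apply: ler_wpM2l => //.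
  apply: Cnorm_le => x _; have [] := clamp_facts (g x) e0; done.
suff H0 : psi g1 = 0 by rewrite Hsplit H0 add0r.
set F := fun x => (1 - rho x) + Num.max (e - `|g x|) 0.
have CF : C01 F.
  have C1 : C01 (fun x => -1 * rho x + 1).
    apply: C01_lin; first exact: rho_cont.
    by apply: continuous_subspaceT => x; exact: cvg_cst.
  have C2 : C01 (fun x => Num.max (e - `|g x|) 0).
    by apply: (@C01_lip g (fun t => Num.max (e - `|t|) 0) Hg) => a b; exact: maxlip.
  have -> : F = (fun x => 1 * (-1 * rho x + 1) + Num.max (e - `|g x|) 0).
    by apply: funext => x; rewrite /F; ring.
  exact: C01_lin.
have [c Ic Hc] := compact_EVT_min (ex_intro _ 0 I01_0) I01_compact CF.
move: Ic; rewrite inE => Ic.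
set th := F c.
have Fge : forall x, I01 x -> 1 - rho x >= 0.
  by move=> x Ix; have /andP [_ r1] := rho_bounds Ix; lra.
have th0 : 0 < th.
  rewrite /th /F.
  have m0 : forall t : RR, 0 <= Num.max t 0 by move=> t; rewrite le_max lexx orbT.
  have [c0|cn] := eqVneq c 0.
    rewrite c0 g0 normr0 subr0 /rho mul0r subr0 subrr add0r.
    by rewrite lt_max e0.
  have /andP [cp _] := Ic.
  have cpos : 0 < c by rewrite lt_neqAle eq_sym cn cp.
  have [s0|sn] := eqVneq (sin (pi / c)) 0.
    have [n Hn] := sin_zero (y := c^-1) ltac:(by rewrite invr_gt0) s0.
    have -> : c = tn n by rewrite /tn -Hn invrK.
    rewrite gt normr0 subr0.
    have := Fge _ (I01_tn n); have : 0 < Num.max e 0 by rewrite lt_max e0.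
    lra.
  have swp : 0 < sw c by rewrite /sw lt_def sqrf_eq0 sn sqr_ge0.
  have : 0 < 1 - rho c by rewrite /rho opprB addrC subrK mulr_gt0.
  have := m0 (e - `|g c|). lra.
have Hrho : forall x, I01 x -> g1 x != 0 -> rho x <= 1 - th.
  move=> x Ix g1n.
  have egx : e < `|g x|.
    rewrite ltNge; apply/negP => gxe; move: g1n.
    have [_ H2 _] := clamp_facts (g x) e0.
    by rewrite /g1 /g2 (H2 gxe) subrr eqxx.
  have Hm : Num.max (e - `|g x|) 0 = 0 by mm; lra.
  have Hx : th <= F x by apply: Hc; rewrite inE.
  move: Hx; rewrite /F Hm. lra.
have [B HB] := C01_bounded Hg.
have B0 : 0 <= B by exact: le_trans (normr_ge0 _) (HB 0 I01_0).
set s := th / (B + 1).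
have s0 : 0 < s by rewrite divr_gt0 // ltr_pwDr.
have sB : s * B <= th.
  rewrite /s mulrAC ler_pdivrMr ?ltr_pwDr // ler_pM2l //; lra.
set p := psi g1.
have conv0 : conv_seq (fun _ : nat => (0 : RR)).
  by apply/cvg_ex; exists 0; exact: (@cvg_cst RR (0 : RR) nat \oo _).
have Hmain : forall u, conv_seq u -> c_norm u <= 1 -> `|phi u| + s * `|p| <= c_dual_norm phi.
  move=> u Hu Hun.
  set k : RR := if 0 <= phi u then 1 else -1.
  set u' := fun n => k * u n + 0.
  have [Hu' _] := conv_lin k Hu conv0.
  have Pu' : phi u' = `|phi u|.
    rewrite /u' phi_lin1 // /k; case: ifP => h.
      by rewrite mul1r ger0_norm.
    by rewrite mulN1r ltr0_norm // ltNge h.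
  have k1 : `|k| = 1 by rewrite /k; case: ifP => _; rewrite ?normrN normr1.
  have Nu' : c_norm u' <= 1.
    apply: cnorm_le => n; rewrite /u' addr0 normrM k1 mul1r.
    exact: le_trans (cnorm_ge n Hu) Hun.
  have cu0 := cnorm_ge0 Hu'.
  set sg : RR := if 0 <= p then s else - s.
  have Psp : sg * p = s * `|p|.
    rewrite /sg; case: ifP => h; first by rewrite ger0_norm.
    by rewrite ltr0_norm ?ltNge ?h // mulNr mulrN.
  have sg1 : `|sg| = s by rewrite /sg; case: ifP => _; rewrite ?normrN gtr0_norm.
  set h := fun x => sg * g1 x + Tm u' x.
  have Ch : C01 h := C01_lin (a:=sg) Cg1 (T_cont Hu').
  have Ph : psi h = sg * p + phi u'.
    by rewrite /h (Hl sg g1 (Tm u') Cg1 (T_cont Hu')) HT.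
  have Nh : C_norm h <= 1.
    apply: Cnorm_le => x Ix; rewrite /h.
    have [g1z|g1n] := eqVneq (g1 x) 0.
      rewrite g1z mulr0 add0r; exact: le_trans (T_bound1 Hu' Ix) Nu'.
    apply: le_trans (ler_normD _ _) _.
    have h1 : `|sg * g1 x| <= th.
      rewrite normrM sg1; apply: le_trans sB; apply: ler_wpM2l; first exact: ltW.
      have [_ _ H3] := clamp_facts (g x) e0.
      exact: le_trans H3 (HB x Ix).
    have h2 : `|Tm u' x| <= 1 - th.
      apply: le_trans (T_bound Hu' Ix) _.
      have /andP [r0 r1] := rho_bounds Ix.
      have := Hrho x Ix g1n. nra.
    lra.
  have := psi_le_norm Hpsi Ch Nh; rewrite Hnorm Ph Psp Pu'.
  have := ler_norm (s * `|p| + `|phi u|). lra.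
have Hsp : c_dual_norm phi <= c_dual_norm phi - s * `|p|.
  apply: ge_sup.
    exists `|phi (fun _ => 0)|, (fun _ => 0) => //; split => //.
    by apply: cnorm_le => n; rewrite normr0.
  move=> _ [u [Hu Hun] <-]; have := Hmain u Hu Hun; lra.
have : s * `|p| <= 0 by lra.
rewrite pmulr_rle0 // normr_le0 => /eqP. done.
Qed.

Theorem corollary6p17 : exists T : (nat -> RR) -> (RR -> RR), U_embedding_c_C T.
Proof.
exists Tm; split.
  split; first by move=> u Hu; exact: T_cont.
  split; first by move=> a u v Hu Hv x _; exact: T_lin.
  by move=> u Hu; exact: T_iso.
move=> phi Hphi.
have [Cpsi [HTpsi Npsi]] := exist_part Hphi.
exists (fun f => phi (Sm f)); split; first by split => // u Hu; rewrite HTpsi.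
move=> psi' Hpsi' HT' Hn' f Hf.
have [Hl _] := Hpsi'.
have [Hs1 Hs2] := S_conv Hf.
set g := fun x => f x - Tm (Sm f) x.
have CT : C01 (Tm (Sm f)) := T_cont Hs1.
have Cg : C01 g.
  have -> : g = (fun x => -1 * Tm (Sm f) x + f x) by apply: funext => x; rewrite /g; ring.
  exact: C01_lin.
have g0 : g 0 = 0 by rewrite /g /Tm eqxx Hs2 subrr.
have gt : forall n, g (tn n) = 0 by move=> n; rewrite /g T_node /Sm subrr.
have Hz := unique_zero Hphi Hpsi' HT' Hn' Cg g0 gt.
have Ef : f = (fun x => 1 * Tm (Sm f) x + g x) by apply: funext => x; rewrite /g; ring.
transitivity (psi' (fun x => 1 * Tm (Sm f) x + g x)); first by rewrite -Ef.
by rewrite (Hl 1 _ _ CT Cg) Hz addr0 mul1r HT'.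
Qed.
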